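(* Let $(X,d)$ be an injective metric space and let $(x,y,t)\in X\times X\times[0,1]$. For every point $z\in\mathbb{E}_D[(1-t)\delta_x+t\delta_y]$ there exists a reversible conical bicombing $\sigma$ on $X$ such that $\sigma_{xy}(t)=z$. In particular, if $X$ admits only one reversible conical bicombing, then the set $\mathbb{E}_D[(1-t)\delta_x+t\delta_y]$ is a singleton.
   Context: A metric space $X$ is injective if for every metric space $B$, subset $A\subset B$ and 1-Lipschitz map $f\colon A\to X$ there is a 1-Lipschitz extension $B\to X$. For a Radon probability measure $\mu$ on $X$ with finite first moment, $W_1$ denotes the first Wasserstein distance $W_1(\mu,\nu)=\inf_\gamma\int d(x,y)\,d\gamma(x,y)$ over couplings $\gamma$ of $(\mu,\nu)$, and the Doss expectation is $\mathbb{E}_D[\mu]:=\{z\in X: d(z,w)\le W_1(\mu,\delta_w)\text{ for all }w\in X\}$. A bicombing is a map $\sigma\colon X\times X\times[0,1]\to X$ such that each $\sigma_{xy}:=\sigma(x,y,\cdot)$ is a geodesic from $x$ to $y$ ($\sigma_{xy}(0)=x$, $\sigma_{xy}(1)=y$, $d(\sigma_{xy}(s),\sigma_{xy}(t))=|s-t|d(x,y)$); it is conical if $d(\sigma_{xy}(t),\sigma_{x'y'}(t))\le(1-t)d(x,x')+t\,d(y,y')$ for all $x,y,x',y'$, $t$, and reversible if $\sigma_{xy}(t)=\sigma_{yx}(1-t)$. *)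

(* Defs.v *)
From HB Require Import structures.
From mathcomp Require Import all_boot all_order all_algebra.
From mathcomp Require Import boolp classical_sets reals.
Set Implicit Arguments. Unset Strict Implicit. Unset Printing Implicit Defensive.
Import Order.TTheory GRing.Theory Num.Theory.
Local Open Scope ring_scope.
Local Open Scope classical_set_scope.

Section Defs.
Variable R : realType.

Definition is_metric (T : Type) (d : T -> T -> R) : Prop :=
  [/\ (forall a b, 0 <= d a b),
      (forall a b, d a b = 0 <-> a = b),
      (forall a b, d a b = d b a) &
      (forall a b c, d a c <= d a b + d b c)].

Definition injective_metric (X : Type) (d : X -> X -> R) : Prop :=
  forall (B : Type) (dB : B -> B -> R), is_metric dB ->
  forall (A : set B) (f : {a : B | A a} -> X),
    (forall a a' : {a : B | A a}, d (f a) (f a') <= dB (proj1_sig a) (proj1_sig a')) ->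
    exists g : B -> X,
      (forall b b', d (g b) (g b') <= dB b b') /\
      (forall a : {a : B | A a}, g (proj1_sig a) = f a).

(* Bicombings: sigma x y t, only values for t in [0,1] are relevant. *)
Definition is_bicombing (X : Type) (d : X -> X -> R) (sigma : X -> X -> R -> X) : Prop :=
  forall x y, sigma x y 0 = x /\ sigma x y 1 = y /\
    (forall s t, 0 <= s <= 1 -> 0 <= t <= 1 ->
       d (sigma x y s) (sigma x y t) = `|s - t| * d x y).

Definition conical (X : Type) (d : X -> X -> R) (sigma : X -> X -> R -> X) : Prop :=
  forall x y x' y' t, 0 <= t <= 1 ->
    d (sigma x y t) (sigma x' y' t) <= (1 - t) * d x x' + t * d y y'.

Definition reversible (X : Type) (sigma : X -> X -> R -> X) : Prop :=
  forall x y t, 0 <= t <= 1 -> sigma x y t = sigma y x (1 - t).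

Definition rev_conical_bicombing (X : Type) (d : X -> X -> R)
  (sigma : X -> X -> R -> X) : Prop :=
  [/\ is_bicombing d sigma, conical d sigma & reversible sigma].

(* X admits exactly one reversible conical bicombing (bicombings being
   identified when they agree on X x X x [0,1]). *)
Definition unique_rev_conical_bicombing (X : Type) (d : X -> X -> R) : Prop :=
  (exists sigma, rev_conical_bicombing d sigma) /\
  (forall s1 s2, rev_conical_bicombing d s1 -> rev_conical_bicombing d s2 ->
     forall x y t, 0 <= t <= 1 -> s1 x y t = s2 x y t).

(* Finitely supported probability measures sum_i a i * delta_(xs i).
   Couplings of such measures are exactly the nonnegative matrices with the
   prescribed marginals. *)
Definition coupling (m n : nat) (a : 'I_m -> R) (b : 'I_n -> R)
  (g : 'I_m -> 'I_n -> R) : Prop :=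
  [/\ (forall i j, 0 <= g i j),
      (forall i, \sum_(j < n) g i j = a i) &
      (forall j, \sum_(i < m) g i j = b j)].

Definition W1 (X : Type) (d : X -> X -> R) (m n : nat)
  (xs : 'I_m -> X) (a : 'I_m -> R) (ys : 'I_n -> X) (b : 'I_n -> R) : R :=
  inf [set c | exists g, coupling a b g /\
        c = \sum_(i < m) \sum_(j < n) g i j * d (xs i) (ys j)].

Definition doss_expectation (X : Type) (d : X -> X -> R) (m : nat)
  (xs : 'I_m -> X) (a : 'I_m -> R) : set X :=
  [set z | forall w : X,
     d z w <= W1 d xs a (fun _ : 'I_1 => w) (fun _ : 'I_1 => 1)].

(* The measure (1-t) delta_x + t delta_y. *)
Definition two_pts (X : Type) (x y : X) : 'I_2 -> X :=
  fun i => if val i == 0%N then x else y.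
Definition two_wts (t : R) : 'I_2 -> R :=
  fun i => if val i == 0%N then 1 - t else t.

End Defs.

(* Main.v *)
Require Import Defs.
From HB Require Import structures.
From mathcomp Require Import all_boot all_order all_algebra.
From mathcomp Require Import boolp classical_sets reals.
From mathcomp Require Import ring lra.
Import Order.TTheory GRing.Theory Num.Theory.
Local Open Scope ring_scope.
Local Open Scope classical_set_scope.

Section Aux.
Variable R : realType.
Variable X : Type.
Variable d : X -> X -> R.
Hypothesis hd : is_metric d.

Definition lin (x y : X) (t : R) : X -> R := fun w => (1 - t) * d x w + t * d y w.
Definition isLin (f : X -> R) : Prop := exists x y t, f = lin x y t.
Definition BB := {f : X -> R | isLin f}.
Definition supd (f g : X -> R) : R := sup [set r | exists w, r = `|f w - g w|].
Definition dB (a b : BB) := supd (proj1_sig a) (proj1_sig b).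
Definition mkB x y t : BB := exist isLin (lin x y t) (ex_intro _ x (ex_intro _ y (ex_intro _ t erefl))).

Lemma d0 a b : 0 <= d a b. Proof. by case: hd. Qed.
Lemma dsym a b : d a b = d b a. Proof. by case: hd. Qed.
Lemma dtri a b c : d a c <= d a b + d b c. Proof. by case: hd. Qed.
Lemma deq a b : d a b = 0 <-> a = b. Proof. by case: hd. Qed.
Lemma dxx a : d a a = 0. Proof. by apply/deq. Qed.

Lemma dist_diff a b w : `|d a w - d b w| <= d a b.
Proof.
rewrite ler_norml; apply/andP; split.
- have := dtri b a w; rewrite (dsym b a); lra.
- have := dtri a b w; lra.
Qed.

Lemma lin_bound x y t w : `|lin x y t w - d x w| <= `|t| * d x y.
Proof.
have -> : lin x y t w - d x w = t * (d y w - d x w) by rewrite /lin; ring.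
rewrite normrM ler_wpM2l //; rewrite -(dsym y x); exact: dist_diff.
Qed.

Lemma bounded (a b : BB) : exists M, forall w, `|proj1_sig a w - proj1_sig b w| <= M.
Proof.
case: a => f [x [y [t Ef]]]; case: b => g [x' [y' [t' Eg]]] /=; rewrite Ef Eg.
exists (`|t| * d x y + d x x' + `|t'| * d x' y') => w.
have h1 := lin_bound x y t w; have h2 := lin_bound x' y' t' w; have h3 := dist_diff x x' w.
have -> : lin x y t w - lin x' y' t' w =
  (lin x y t w - d x w) + (d x w - d x' w) - (lin x' y' t' w - d x' w) by ring.
apply: (le_trans (ler_normB _ _)); apply: lerD => //.
apply: (le_trans (ler_normD _ _)); exact: lerD.
Qed.

Lemma nonemptyB (a : BB) : exists w : X, True.
Proof. by case: a => f [x _]; exists x. Qed.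

Lemma supd_ge (a b : BB) w : `|proj1_sig a w - proj1_sig b w| <= dB a b.
Proof.
have [M HM] := bounded a b.
apply: sup_upper_bound; last by exists w.
split; first by exists `|proj1_sig a w - proj1_sig b w|, w.
exists M => r [w' ->]; exact: HM.
Qed.

Lemma supd_le (a b : BB) M : (forall w, `|proj1_sig a w - proj1_sig b w| <= M) -> dB a b <= M.
Proof.
move=> HM; have [w _] := nonemptyB a.
apply: ge_sup; first by exists `|proj1_sig a w - proj1_sig b w|, w.
by move=> r [w' ->].
Qed.

Lemma dB0 a b : 0 <= dB a b.
Proof. have [w _] := nonemptyB a; exact: le_trans (normr_ge0 _) (supd_ge a b w). Qed.

Lemma BB_eq (a b : BB) : proj1_sig a = proj1_sig b -> a = b.
Proof.
case: a => f pf; case: b => g pg /= E; subst g.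
by rewrite (Prop_irrelevance pf pg).
Qed.

Lemma dBsym a b : dB a b = dB b a.
Proof. apply/le_anti; apply/andP; split; apply: supd_le => w; by rewrite distrC supd_ge. Qed.

Lemma dB_metric : is_metric dB.
Proof.
split.
- exact: dB0.
- move=> a b; split.
  + move=> H; apply: BB_eq; apply: funext => w.
    apply/eqP; rewrite -subr_eq0 -normr_eq0 eq_le normr_ge0 andbT.
    by rewrite -H supd_ge.
  + move=> ->; apply/le_anti; rewrite dB0 andbT.
    by apply: supd_le => w; rewrite subrr normr0.
- move=> a b; apply/le_anti; apply/andP; split; apply: supd_le => w;
    by rewrite distrC supd_ge.
- move=> a b c; apply: supd_le => w.
  have -> : proj1_sig a w - proj1_sig c w =
    (proj1_sig a w - proj1_sig b w) + (proj1_sig b w - proj1_sig c w) by ring.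
  apply: (le_trans (ler_normD _ _)); apply: lerD; exact: supd_ge.
Qed.

Lemma key (hinj : injective_metric d) (x y : X) (t : R) (z : X)
  (hz : forall w, d z w <= lin x y t w) :
  exists sigma : X -> X -> R -> X,
    rev_conical_bicombing d sigma /\ sigma x y t = z.
Proof.
pose h := mkB x y t.
pose A : set BB := fun b => (exists u, proj1_sig b = d u) \/ b = h.
pose f0 : {b : BB | A b} -> X := fun b =>
  match pselect (exists u, proj1_sig (proj1_sig b) = d u) with
  | left e => proj1_sig (cid e)
  | right _ => z end.
have f0E : forall (b : {b : BB | A b}) u, proj1_sig (proj1_sig b) = d u -> f0 b = u.
  move=> b u Hu; rewrite /f0; case: pselect => [e|n]; last by exfalso; apply: n; exists u.
  case: (cid e) => u' /= Hu'; rewrite Hu in Hu'.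
  have := congr1 (fun f => f u) Hu'; rewrite /= dxx => /esym/deq; by [].
have hzu : forall u, proj1_sig h = d u -> u = z.
  move=> u Hu; have := hz u; have -> : lin x y t u = proj1_sig h u by []; rewrite Hu dxx => H.
  by apply/esym/deq/le_anti; rewrite H d0.
have f0z : forall b : {b : BB | A b}, ~ (exists u, proj1_sig (proj1_sig b) = d u) -> f0 b = z.
  by move=> b n; rewrite /f0; case: pselect.
have Lz : forall u (b : BB), proj1_sig b = d u -> d z u <= dB h b.
  move=> u b Hb; apply: le_trans (hz u) _; apply: le_trans (supd_ge h b u).
  rewrite Hb dxx subr0 /=; exact: ler_norm.
have Lip : forall a a' : {b : BB | A b}, d (f0 a) (f0 a') <= dB (proj1_sig a) (proj1_sig a').
  move=> [a Aa] [a' Aa'] /=.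
  case: (pselect (exists u, proj1_sig a = d u)) => [[u Hu]|n].
  - rewrite (f0E (exist A a Aa) u Hu).
    case: (pselect (exists u, proj1_sig a' = d u)) => [[u' Hu']|n'].
    + rewrite (f0E (exist A a' Aa') u' Hu').
      apply: le_trans (supd_ge a a' u'); rewrite Hu Hu' dxx subr0; exact: ler_norm.
    + rewrite (f0z (exist A a' Aa') n'); case: Aa' => [e|Ea']; first by exfalso.
      rewrite dsym Ea'; apply: le_trans (Lz u a Hu) _.
      by rewrite dBsym.
  - rewrite (f0z (exist A a Aa) n); case: Aa => [e|Ea]; first by exfalso.
    case: (pselect (exists u, proj1_sig a' = d u)) => [[u' Hu']|n'].
    + rewrite (f0E (exist A a' Aa') u' Hu') Ea; exact: Lz.
    + rewrite (f0z (exist A a' Aa') n') dxx; exact: dB0.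
have [g [gL gE]] := hinj _ _ dB_metric A f0 Lip.
have gd : forall b (u : X), proj1_sig b = d u -> g b = u.
  move=> b u Hu; have Ab : A b by left; exists u.
  by rewrite (gE (exist A b Ab)); apply: f0E.
pose sigma x y t := g (mkB x y t).
have s0 : forall x y, sigma x y 0 = x.
  move=> x0 y0; apply: gd; apply: funext => w /=; rewrite /lin; ring.
have s1 : forall x y, sigma x y 1 = y.
  move=> x0 y0; apply: gd; apply: funext => w /=; rewrite /lin; ring.
have sle : forall x y s t, d (sigma x y s) (sigma x y t) <= `|s - t| * d x y.
  move=> x0 y0 s0' t0; apply: le_trans (gL _ _) _; apply: supd_le => w /=.
  have -> : lin x0 y0 s0' w - lin x0 y0 t0 w = (s0' - t0) * (d y0 w - d x0 w) by rewrite /lin; ring.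
  rewrite normrM ler_wpM2l // -(dsym y0 x0); exact: dist_diff.
exists sigma; split; last first.
  have Ah : A h by right.
  rewrite /sigma -/h (gE (exist A h Ah)).
  case: (pselect (exists u, proj1_sig h = d u)) => [[u Hu]|n].
    by rewrite (f0E (exist A h Ah) u Hu); apply: hzu.
  exact: (f0z (exist A h Ah) n).
split.
- move=> x0 y0; split; first exact: s0; split; first exact: s1.
  move=> s t0 /andP[s0' s1'] /andP[t0' t1']; apply/le_anti; rewrite sle /=.
  have D := d0 x0 y0.
  wlog st : s t0 s0' s1' t0' t1' / s <= t0.
    move=> W; case: (leP s t0) => st; first exact: W.
    rewrite (dsym (sigma x0 y0 s)) distrC; apply: (W t0 s) => //; exact: ltW.
  rewrite ler0_norm ?subr_le0 //.
  have h1 := sle x0 y0 0 s; have h2 := sle x0 y0 t0 1.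
  rewrite s0 in h1; rewrite s1 in h2.
  rewrite sub0r normrN ger0_norm // in h1.
  rewrite ler0_norm ?subr_le0 // in h2.
  have T1 := dtri x0 (sigma x0 y0 s) y0.
  have T2 := dtri (sigma x0 y0 s) (sigma x0 y0 t0) y0.
  nra.
- move=> x0 y0 x' y' t0 /andP[t0' t1']; apply: le_trans (gL _ _) _; apply: supd_le => w /=.
  have -> : lin x0 y0 t0 w - lin x' y' t0 w =
     (1 - t0) * (d x0 w - d x' w) + t0 * (d y0 w - d y' w) by rewrite /lin; ring.
  apply: le_trans (ler_normD _ _) _; rewrite !normrM (ger0_norm t0') ger0_norm ?subr_ge0 //.
  apply: lerD; apply: ler_wpM2l; rewrite ?subr_ge0 //; exact: dist_diff.
- move=> x0 y0 t0 _; rewrite /sigma; congr g; apply: BB_eq; apply: funext => w /=.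
  rewrite /lin; ring.
Qed.

End Aux.
Arguments lin {R X} d x y t.
Arguments key {R X d}.

Lemma W1_two (R : realType) (X : Type) (d : X -> X -> R) x y (t : R) (ht : 0 <= t <= 1) w :
  W1 d (two_pts x y) (two_wts t) (fun _ : 'I_1 => w) (fun _ : 'I_1 => 1) = lin d x y t w.
Proof.
rewrite /W1; set S := [set c | _].
suff -> : S = [set lin d x y t w] by rewrite inf1.
case/andP: ht => t0 t1.
apply/seteqP; split => c.
- move=> [g [[g0 gr gc] ->]] /=.
  rewrite !big_ord_recl !big_ord0 !addr0.
  have := gr ord0; rewrite big_ord_recl big_ord0 addr0 => ->.
  have := gr (lift ord0 ord0); rewrite big_ord_recl big_ord0 addr0 => ->.
  by rewrite /two_wts /two_pts /lin /=.
- move=> /= ->; exists (fun i _ => two_wts t i); split.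
  + split.
    * move=> i _; rewrite /two_wts; case: ifP => _; lra.
    * by move=> i; rewrite big_ord_recl big_ord0 addr0.
    * by move=> j; rewrite !big_ord_recl big_ord0 /= /two_wts /=; ring.
  + rewrite !big_ord_recl !big_ord0 /= !addr0 /two_wts /two_pts /lin /=; ring.
Qed.

Theorem lemma3p4 (R : realType) (X : Type) (d : X -> X -> R)
  (hd : is_metric d) (hinj : injective_metric d)
  (x y : X) (t : R) (ht : 0 <= t <= 1) :
  (forall z : X, doss_expectation d (two_pts x y) (two_wts t) z ->
     exists sigma : X -> X -> R -> X,
       rev_conical_bicombing d sigma /\ sigma x y t = z) /\
  (unique_rev_conical_bicombing d ->
     exists z0 : X, doss_expectation d (two_pts x y) (two_wts t) = [set z0]).
Proof.
have P1 : forall z : X, doss_expectation d (two_pts x y) (two_wts t) z ->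
     exists sigma : X -> X -> R -> X,
       rev_conical_bicombing d sigma /\ sigma x y t = z.
  move=> z hz; apply: (key hd hinj) => w; rewrite -(@W1_two R X d x y t ht w); exact: hz.
split => //.
move=> [[s0 [sb sc sr]] U]; exists (s0 x y t).
apply/seteqP; split => z.
- move=> /P1 [s [hs <-]] /=; apply: U => //.
- move=> /= ->{z} w; rewrite (@W1_two R X d x y t ht w).
  have ww : s0 w w t = w.
    have [h0 [_ hg]] := sb w w.
    have H01 : 0 <= (0:R) <= 1 by apply/andP; split; [exact: lexx | exact: ler01].
    have := hg t 0 ht H01; rewrite h0.
    case: hd => _ hdeq _ _; rewrite (proj2 (hdeq w w) erefl) mulr0 => /hdeq; done.
  have := sc x y w w t ht; rewrite ww.
  by rewrite /lin.
Qed.
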